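(* Let $n\ge1$ and $T_n=T(x_1\dots x_n,k)$ with $x_1,\dots,x_n$ i.i.d. uniform on $\{B,b,R,r\}$ and $k$ uniform on $\{1,\dots,n\}$ (independent). Then for each $j\in\{1,\dots,n\}$, each vertex $v$ of the $j$-th face of $T_n$ (the triangle created at step $j$), and each $m\ge1$, $$\mathbb P[\deg(v)\ge m]\le 2\left(\tfrac34\right)^{m/4}.$$
   Context: Necklace construction (Sheffield). Given a finite word $X=x_1\dots x_n$ in $\{B,b,R,r\}$, build inductively disc triangulations $D_0\subset\dots\subset D_n$ in the closed upper half-plane with blue/red vertices and an active edge with blue endpoint $b_j$ and red endpoint $r_j$; initially non-positive integers are blue, positive integers red, $b_0=0,r_0=1$. Step according to $x_{j+1}$: (B) new blue vertex $b_{j+1}$, triangle $(b_j,r_j,b_{j+1})$, $r_{j+1}=r_j$; (R) new red vertex $r_{j+1}$, triangle $(b_j,r_j,r_{j+1})$, $b_{j+1}=b_j$; (b) $b_{j+1}$ = counterclockwise boundary neighbour of $b_j$ (or $m-1$, adding edge $[m-1,m]$, if $b_j=m\in\mathbb Z$), triangle $(b_{j+1},b_j,r_j)$, $r_{j+1}=r_j$; (r) $r_{j+1}$ = clockwise boundary neighbour of $r_j$ (or $m+1$, adding $[m,m+1]$, if $r_j=m\in\mathbb Z$), triangle $(b_j,r_j,r_{j+1})$, $b_{j+1}=b_j$. $T_+(X)$ is $D_n$ rooted at the first triangle constructed; $T(X,k)$ is $T_+(X)$ rerooted at the triangle created at step $k$. $\deg(v)$ is the degree of $v$ in the graph of $T_n$.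 *)

(* Defs.v *)
From Stdlib Require Import Reals.
From HB Require Import structures.
From mathcomp Require Import all_boot all_order all_algebra.

Set Implicit Arguments.
Unset Strict Implicit.
Unset Printing Implicit Defensive.

Inductive letter := LB | Lb | LR | Lr.

Definition letter_code (x : letter) : bool * bool :=
  match x with LB => (true, true) | Lb => (true, false)
             | LR => (false, true) | Lr => (false, false) end.
Definition letter_decode (c : bool * bool) : letter :=
  match c with (true, true) => LB | (true, false) => Lb
             | (false, true) => LR | (false, false) => Lr end.
Lemma letter_codeK : cancel letter_code letter_decode.
Proof. by case. Qed.
HB.instance Definition _ := Finite.copy letter (can_type letter_codeK).

(* Vertices: the integers (initial vertices on the real line; non-positive
   ones blue, positive ones red) and the vertex VNew j created at step j. *)
Inductive vtx := VInt of int | VNew of nat.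

Definition vtx_code (v : vtx) : int + nat :=
  match v with VInt z => inl z | VNew k => inr k end.
Definition vtx_decode (c : int + nat) : vtx :=
  match c with inl z => VInt z | inr k => VNew k end.
Lemma vtx_codeK : cancel vtx_code vtx_decode.
Proof. by case. Qed.
HB.instance Definition _ := Equality.copy vtx (can_type vtx_codeK).

(* State of the necklace construction after j steps (the disc
   triangulation D_j).  The boundary of the unbounded complementary region
   of D_j in the closed upper half-plane is
      ... , bint-2, bint-1, bint, rev bstk | rstk, rint, rint+1, ...
   read from -oo to +oo: the blue endpoint of the active edge is the head of
   [bstk ++ (bint, bint-1, ...)], its counterclockwise boundary neighbour is
   the next element; symmetrically for red with rstk / rint (clockwise).
   [edges] is the list (with multiplicity) of edges of D_j, [faces] the list
   of triangles in order of creation. *)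
Record state := State {
  bstk : seq vtx; bint : int;
  rstk : seq vtx; rint : int;
  edges : seq (vtx * vtx);
  faces : seq (vtx * vtx * vtx) }.

Definition init_state : state :=
  State [::] 0%Z [::] 1%Z [:: (VInt 0%Z, VInt 1%Z)] [::].

Definition blue_end (s : state) : vtx := head (VInt (bint s)) (bstk s).
Definition red_end (s : state) : vtx := head (VInt (rint s)) (rstk s).

Definition step (j : nat) (x : letter) (s : state) : state :=
  let b := blue_end s in let r := red_end s in
  match x with
  | LB =>
    let v := VNew j in
    State (v :: bstk s) (bint s) (rstk s) (rint s)
          (edges s ++ [:: (b, v); (r, v)]) (rcons (faces s) (b, r, v))
  | LR =>
    let v := VNew j in
    State (bstk s) (bint s) (v :: rstk s) (rint s)
          (edges s ++ [:: (b, v); (r, v)]) (rcons (faces s) (b, r, v))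
  | Lb => (* b_{j+1} = ccw boundary neighbour of b_j; triangle (b_{j+1}, b_j, r_j) *)
    match bstk s with
    | _ :: st =>
      let b' := head (VInt (bint s)) st in
      State st (bint s) (rstk s) (rint s)
            (rcons (edges s) (b', r)) (rcons (faces s) (b', b, r))
    | [::] => (* b_j = m integer: b_{j+1} = m-1, add edge [m-1, m] *)
      let b' := VInt (bint s - 1)%R in
      State [::] (bint s - 1)%R (rstk s) (rint s)
            (edges s ++ [:: (b', b); (b', r)]) (rcons (faces s) (b', b, r))
    end
  | Lr => (* r_{j+1} = clockwise boundary neighbour of r_j; triangle (b_j, r_j, r_{j+1}) *)
    match rstk s with
    | _ :: st =>
      let r' := head (VInt (rint s)) st in
      State (bstk s) (bint s) st (rint s)
            (rcons (edges s) (b, r')) (rcons (faces s) (b, r, r'))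
    | [::] => (* r_j = m integer: r_{j+1} = m+1, add edge [m, m+1] *)
      let r' := VInt (rint s + 1)%R in
      State (bstk s) (bint s) [::] (rint s + 1)%R
            (edges s ++ [:: (r, r'); (b, r')]) (rcons (faces s) (b, r, r'))
    end
  end.

(* Run the construction on x_1 ... x_n; step t (1-based) reads x_t. *)
Fixpoint run_from (t : nat) (X : seq letter) (s : state) : state :=
  match X with
  | [::] => s
  | x :: X' => run_from t.+1 X' (step t x s)
  end.

Definition necklace (X : seq letter) : state := run_from 1 X init_state.

Definition rooted_necklace (X : seq letter) (k : nat) : state * nat :=
  (necklace X, k).

(* Degree of v in the graph of the (rooted) triangulation: number of edge
   incidences (edges counted with multiplicity; no loops occur). *)
Definition deg (T : state * nat) (v : vtx) : nat :=
  count (fun e => e.1 == v) (edges T.1) + count (fun e => e.2 == v) (edges T.1).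

Definition face (T : state * nat) (j : nat) : vtx * vtx * vtx :=
  nth (VInt 0%Z, VInt 0%Z, VInt 0%Z) (faces T.1) j.-1.

Definition face_vertex (f : vtx * vtx * vtx) (i : 'I_3) : vtx :=
  match val i with 0 => f.1.1 | 1 => f.1.2 | _ => f.2 end.

(* The word x_1 ... x_n encoded by w : 'I_n -> letter (x_{t+1} = w t). *)
Definition word_of (n : nat) (w : {ffun 'I_n -> letter}) : seq letter :=
  [seq w t | t <- enum 'I_n].

(* Sample space: (x_1..x_n, k) uniform on {B,b,R,r}^n x {1..n};
   the pair (w, k0) with k0 : 'I_n encodes k = k0 + 1. *)
Definition prob_deg_ge (n j : nat) (i : 'I_3) (m : nat) : R :=
  Rdiv (INR #|[set p : {ffun 'I_n -> letter} * 'I_n |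
           let T := rooted_necklace (word_of p.1) (val p.2).+1 in
           (m <= deg T (face_vertex (face T j) i))%N]|)
   (INR #|{: {ffun 'I_n -> letter} * 'I_n}|).

(* Main.v *)
Require Import Defs.
From Stdlib Require Import Reals Lra.
From mathcomp Require Import all_boot all_order all_algebra.
From mathcomp Require Import zify.
Set Implicit Arguments.
Unset Strict Implicit.
Unset Printing Implicit Defensive.
Import Order.TTheory GRing.Theory Num.Theory.


Lemma VNew_eq a b : (VNew a == VNew b) = (a == b).
Proof. by apply/eqP/eqP => [[->]|->]. Qed.
Lemma VInt_eq a b : (VInt a == VInt b) = (a == b).
Proof. by apply/eqP/eqP => [[->]|->]. Qed.
Lemma VNew_VInt a b : (VNew a == VInt b) = false.
Proof. by apply/eqP. Qed.
Lemma VInt_VNew a b : (VInt a == VNew b) = false.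
Proof. by apply/eqP. Qed.

Definition BL s := rcons (bstk s) (VInt (bint s)).
Definition RL s := rcons (rstk s) (VInt (rint s)).
Definition oldv (t : nat) (s : state) (v : vtx) : bool :=
  match v with VNew k => (k < t)%N | VInt z => ((bint s <= z) && (z <= rint s))%R end.
Definition Inv t s := [&& uniq (BL s ++ RL s), all (oldv t s) (BL s ++ RL s)
   & all (fun e => oldv t s e.1 && oldv t s e.2) (edges s)].

Definition newedges (t : nat) (x : letter) (s : state) : seq (vtx * vtx) :=
  let b := blue_end s in let r := red_end s in
  match x with
  | LB | LR => [:: (b, VNew t); (r, VNew t)]
  | Lb => match bstk s with
          | _ :: st => [:: (head (VInt (bint s)) st, r)]
          | [::] => [:: (VInt (bint s - 1)%R, b); (VInt (bint s - 1)%R, r)] end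
  | Lr => match rstk s with
          | _ :: st => [:: (b, head (VInt (rint s)) st)]
          | [::] => [:: (r, VInt (rint s + 1)%R); (b, VInt (rint s + 1)%R)] end
  end.

Definition newface (t : nat) (x : letter) (s : state) : vtx * vtx * vtx :=
  let b := blue_end s in let r := red_end s in
  match x with
  | LB | LR => (b, r, VNew t)
  | Lb => match bstk s with
          | _ :: st => (head (VInt (bint s)) st, b, r)
          | [::] => (VInt (bint s - 1)%R, b, r) end
  | Lr => match rstk s with
          | _ :: st => (b, r, head (VInt (rint s)) st)
          | [::] => (b, r, VInt (rint s + 1)%R) end
  end.

Lemma edges_step t x s : edges (step t x s) = edges s ++ newedges t x s.
Proof.
case: x; rewrite /step /newedges //=.
  by case: (bstk s) => [|y st] //=; rewrite cats1.
by case: (rstk s) => [|y st] //=; rewrite cats1.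
Qed.

Lemma faces_step t x s : faces (step t x s) = rcons (faces s) (newface t x s).
Proof.
case: x; rewrite /step /newface //=.
  by case: (bstk s) => [|y st].
by case: (rstk s) => [|y st].
Qed.

Lemma bint_step t x s : (bint (step t x s) <= bint s)%R.
Proof. case: x; rewrite /step /=; try case: (bstk s); try case: (rstk s); intros; simpl; lia. Qed.
Lemma rint_step t x s : (rint s <= rint (step t x s))%R.
Proof. case: x; rewrite /step /=; try case: (bstk s); try case: (rstk s); intros; simpl; lia. Qed.

Lemma oldv_mono t t' s s' v : (t <= t')%N -> (bint s' <= bint s)%R ->
  (rint s <= rint s')%R -> oldv t s v -> oldv t' s' v.
Proof.
case: v => [z|k] /= h1 h2 h3; first by case/andP=> *; apply/andP; split; lia.
lia.
Qed.

Lemma oldv_step t x s v : oldv t s v -> oldv t.+1 (step t x s) v.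
Proof. apply: oldv_mono => //; [exact: bint_step | exact: rint_step]. Qed.

Lemma BL_step t x s : BL (step t x s) =
  match x with LB => VNew t :: BL s
  | Lb => if bstk s is _ :: _ then behead (BL s) else [:: VInt (bint s - 1)%R]
  | _ => BL s end.
Proof. case: x; rewrite /step /BL //=; case: (bstk s); case: (rstk s) => //. Qed.
Lemma RL_step t x s : RL (step t x s) =
  match x with LR => VNew t :: RL s
  | Lr => if rstk s is _ :: _ then behead (RL s) else [:: VInt (rint s + 1)%R]
  | _ => RL s end.
Proof. case: x; rewrite /step /RL //=; case: (bstk s); case: (rstk s) => //. Qed.

Lemma notin_new t s L : all (oldv t s) L -> VNew t \notin L.
Proof. by move=> H; apply/negP => /(allP H) /=; rewrite ltnn. Qed.
Lemma notin_bm t s L : all (oldv t s) L -> VInt (bint s - 1)%R \notin L.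
Proof. by move=> H; apply/negP => /(allP H) /=; case/andP => *; lia. Qed.
Lemma notin_rp t s L : all (oldv t s) L -> VInt (rint s + 1)%R \notin L.
Proof. by move=> H; apply/negP => /(allP H) /=; case/andP => *; lia. Qed.

Lemma blue_end_BL s : blue_end s \in BL s.
Proof. by rewrite /blue_end /BL; case: (bstk s) => [|y st] /=; rewrite inE eqxx. Qed.
Lemma red_end_RL s : red_end s \in RL s.
Proof. by rewrite /red_end /RL; case: (rstk s) => [|y st] /=; rewrite inE eqxx. Qed.
Lemma head_in_rcons (st : seq vtx) z : head z st \in rcons st z.
Proof. by case: st => [|y st] /=; rewrite inE eqxx ?orbT. Qed.

Lemma Inv_step t x s : Inv t s -> Inv t.+1 (step t x s).
Proof.
case/and3P => U A E.
have bir : (bint s <= rint s)%R.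
  have : VInt (bint s) \in BL s ++ RL s by rewrite mem_cat /BL mem_rcons inE eqxx.
  by move/(allP A) => /= /andP [].
have hO x' u : u \in BL s ++ RL s -> oldv t.+1 (step t x' s) u.
  by move=> /(allP A) /oldv_step; apply.
have hB : blue_end s \in BL s ++ RL s by rewrite mem_cat blue_end_BL.
have hR : red_end s \in BL s ++ RL s by rewrite mem_cat red_end_RL orbT.
have hE x' : all (fun e => oldv t.+1 (step t x' s) e.1 && oldv t.+1 (step t x' s) e.2) (edges s).
  apply/allP => e /(allP E) /andP [e1 e2].
  by rewrite !oldv_step.
apply/and3P; split.
- rewrite BL_step RL_step; case: x.
  + by rewrite cat_cons /= U andbT (notin_new A).
  + move: U A; rewrite /BL; case: (bstk s) => [|y st] /= U A.
      case/andP: U => _ ->; rewrite andbT; apply: (notin_bm (t:=t)); by case/andP: A.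
    by case/andP: U.
  + by rewrite -cat1s uniq_catCA cat1s cons_uniq U andbT (notin_new A).
  + move: U A; rewrite /RL; case: (rstk s) => [|y st] /= U A.
      rewrite -cat1s uniq_catCA cat1s cons_uniq; apply/andP; split.
        by apply: (notin_rp (t:=t)); rewrite cats0; move: A; rewrite all_cat => /andP [].
      by rewrite cats0; move: U; rewrite cat_uniq => /andP [].
    by move: U; rewrite -cat1s uniq_catCA cat1s cons_uniq => /andP [].
- rewrite all_cat; apply/andP; split.
  + rewrite BL_step; case: x.
    * rewrite /= ltnSn /=.
      by apply/allP => u uI; apply: (hO LB); rewrite mem_cat uI.
    * move: (hO Lb); rewrite /BL; case E1: (bstk s) => [|y st] /= hO'.
        by rewrite /step E1 /= andbT; apply/andP; split; lia.
      by apply/allP => u uI; apply: hO'; rewrite ?in_cons ?mem_cat ?in_cons uI !orbT.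
    * by apply/allP => u uI; apply: (hO LR); rewrite mem_cat uI.
    * by apply/allP => u uI; apply: (hO Lr); rewrite mem_cat uI.
  + rewrite RL_step; case: x.
    * by apply/allP => u uI; apply: (hO LB); rewrite mem_cat uI orbT.
    * by apply/allP => u uI; apply: (hO Lb); rewrite mem_cat uI orbT.
    * rewrite /= ltnSn /=.
      by apply/allP => u uI; apply: (hO LR); rewrite mem_cat uI orbT.
    * move: (hO Lr); rewrite /RL; case E1: (rstk s) => [|y st] /= hO'.
        by rewrite /step E1 /= andbT; apply/andP; split; lia.
      by apply/allP => u uI; apply: hO'; rewrite ?in_cons ?mem_cat ?in_cons uI !orbT.
- rewrite edges_step all_cat hE /= /newedges; case: x => /=.
  + by rewrite !(hO LB) // ltnSn.
  + have hOr := hO Lb _ hR.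
    have hOh : forall y st, bstk s = y :: st -> oldv t.+1 (step t Lb s) (head (VInt (bint s)) st).
      move=> y st E1; apply: hO; rewrite mem_cat /BL E1 /= in_cons head_in_rcons orbT //.
    move: hOr hOh; rewrite /step /blue_end; case E1: (bstk s) => [|y st] /= hOr hOh.
      by rewrite hOr /= ?andbT; repeat (apply/andP; split); lia.
    by rewrite hOr (hOh y st).
  + by rewrite !(hO LR) // ltnSn.
  + have hOb := hO Lr _ hB.
    have hOh : forall y st, rstk s = y :: st -> oldv t.+1 (step t Lr s) (head (VInt (rint s)) st).
      move=> y st E1; apply: hO; rewrite mem_cat /RL E1 /= in_cons head_in_rcons !orbT //.
    move: hOb hOh; rewrite /step /red_end; case E1: (rstk s) => [|y st] /= hOb hOh.
      by rewrite hOb /= ?andbT; repeat (apply/andP; split); lia.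
    by rewrite hOb (hOh y st).
Qed.


Definition degE (E : seq (vtx * vtx)) (v : vtx) : nat :=
  (count (fun e => e.1 == v) E + count (fun e => e.2 == v) E)%N.
Lemma degE_cat E1 E2 v : degE (E1 ++ E2) v = (degE E1 v + degE E2 v)%N.
Proof. rewrite /degE !count_cat; lia. Qed.

Inductive vpos := PB of nat | PR of nat | POut.
Definition posf s v := if v \in BL s then PB (index v (BL s))
  else if v \in RL s then PR (index v (RL s)) else POut.

Definition incB x d (e : bool) : nat :=
  match x with Lb => if e then 1 else (d == 1)%N | _ => (d == 0)%N end.
Definition incR x d (e : bool) : nat :=
  match x with Lr => if e then 1 else (d == 1)%N | _ => (d == 0)%N end.
Definition incp x p s := match p with PB d => incB x d (nilp (bstk s))
  | PR d => incR x d (nilp (rstk s)) | POut => 0%N end.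
Definition npos x p := match p with
 | PB d => match x with LB => PB d.+1 | Lb => if d is d'.+1 then PB d' else POut | _ => PB d end
 | PR d => match x with LR => PR d.+1 | Lr => if d is d'.+1 then PR d' else POut | _ => PR d end
 | POut => POut end.

Lemma neq_notin (w v : vtx) (L : seq vtx) : w \in L -> v \notin L -> (w == v) = false.
Proof. by move=> wL; apply: contraNF => /eqP <-. Qed.

Lemma nth_eq_index (L : seq vtx) i v x0 : uniq L -> v \in L -> (i < size L)%N ->
  (nth x0 L i == v) = (i == index v L).
Proof. by move=> U vL iL; rewrite -{1}(nth_index x0 vL) nth_uniq // index_mem. Qed.

Lemma blue_end_nth s : blue_end s = nth (VInt 0) (BL s) 0.
Proof. by rewrite /blue_end /BL; case: (bstk s). Qed.
Lemma red_end_nth s : red_end s = nth (VInt 0) (RL s) 0.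
Proof. by rewrite /red_end /RL; case: (rstk s). Qed.

Lemma Inv_old t s u : Inv t s -> u \in BL s ++ RL s -> oldv t s u.
Proof. by case/and3P => _ A _ /(allP A). Qed.

Lemma fresh_facts t s v : oldv t s v ->
  [/\ (VNew t == v) = false, (VInt (bint s - 1)%R == v) = false
    & (VInt (rint s + 1)%R == v) = false].
Proof.
case: v => [z|k] /=.
  by case/andP => h1 h2; rewrite !VNew_VInt !VInt_eq; split => //; apply/eqP; lia.
by move=> h; rewrite !VInt_VNew VNew_eq; split => //; apply/eqP; lia.
Qed.

Lemma inc_step t x s v : Inv t s -> oldv t s v ->
  degE (newedges t x s) v = incp x (posf s v) s.
Proof.
move=> I0 ov; have [fN fbm frp] := fresh_facts ov.
have U : uniq (BL s ++ RL s) by case/and3P: I0.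
move: (U); rewrite cat_uniq => /and3P [UB UBR UR].
have bB := blue_end_BL s; have rR := red_end_RL s.
rewrite /posf; case: ifP => vB.
- set d := index v (BL s).
  have vR : v \notin RL s by apply: contra UBR => vR; apply/hasP; exists v.
  have eb : (blue_end s == v) = (d == 0)%N by rewrite blue_end_nth nth_eq_index //; case: (BL s) bB.
  have er : (red_end s == v) = false by apply: neq_notin vR.
  case: x; rewrite /newedges /degE /= ?eb ?er ?fN ?fbm ?frp /=.
  + by case: (d == 0)%N.
  + have hd y st : bstk s = y :: st -> (head (VInt (bint s)) st == v) = (d == 1)%N.
      move=> E1; have -> : head (VInt (bint s)) st = nth (VInt 0) (BL s) 1.
        by rewrite /BL E1; case: (st).
      by rewrite nth_eq_index // /BL E1 size_rcons.
    case E1: (bstk s) => [|y st] /=.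
      have d0 : d = 0%N by move: vB; rewrite /d /BL E1 /= inE => /eqP ->; rewrite eqxx.
      by rewrite fbm eb er d0.
    by rewrite (hd y st E1) er /= ?addn0.
  + by case: (d == 0)%N.
  + have hr y st : rstk s = y :: st -> (head (VInt (rint s)) st == v) = false.
      move=> E1; apply: neq_notin vR; by rewrite /RL E1 /= in_cons head_in_rcons orbT.
    case E1: (rstk s) => [|y st] /=.
      by rewrite ?er ?eb ?frp /= ?addn0; case: (d == 0)%N.
    by rewrite ?eb (hr y st E1) /= ?addn0; case: (d == 0)%N.
- have vB' : v \notin BL s by rewrite vB.
  have eb : (blue_end s == v) = false by apply: neq_notin vB'.
  have hb y st : bstk s = y :: st -> (head (VInt (bint s)) st == v) = false.
    move=> E1; apply: neq_notin vB'; by rewrite /BL E1 /= in_cons head_in_rcons orbT.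
  case: ifP => vR.
  + set d := index v (RL s).
    have er : (red_end s == v) = (d == 0)%N by rewrite red_end_nth nth_eq_index //; case: (RL s) rR.
    have hr y st : rstk s = y :: st -> (head (VInt (rint s)) st == v) = (d == 1)%N.
      move=> E1; have -> : head (VInt (rint s)) st = nth (VInt 0) (RL s) 1.
        by rewrite /RL E1; case: (st).
      by rewrite nth_eq_index // /RL E1 size_rcons.
    case: x; rewrite /newedges /degE /= ?eb ?er ?fN ?fbm ?frp /=.
    * by case: (d == 0)%N.
    * case E1: (bstk s) => [|y st] /=.
        by rewrite ?fbm ?eb ?er /= ?addn0; case: (d == 0)%N.
      by rewrite (hb y st E1) ?er /= ?addn0; case: (d == 0)%N.
    * by case: (d == 0)%N.
    * case E1: (rstk s) => [|y st] /=.
        have d0 : d = 0%N by move: vR; rewrite /d /RL E1 /= inE => /eqP ->; rewrite eqxx.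
        by rewrite ?frp ?eb ?er d0.
      by rewrite (hr y st E1) ?eb /= ?addn0.
  + have vR' : v \notin RL s by rewrite vR.
    have er : (red_end s == v) = false by apply: neq_notin vR'.
    have hr y st : rstk s = y :: st -> (head (VInt (rint s)) st == v) = false.
      move=> E1; apply: neq_notin vR'; by rewrite /RL E1 /= in_cons head_in_rcons orbT.
    case: x; rewrite /newedges /degE /= ?eb ?er ?fN ?fbm ?frp //=.
    * case E1: (bstk s) => [|y st] /=.
        by rewrite ?fbm ?eb ?er.
      by rewrite (hb y st E1) ?er.
    * case E1: (rstk s) => [|y st] /=.
        by rewrite ?frp ?eb ?er.
      by rewrite (hr y st E1) ?eb.
Qed.


Lemma notin_BL_step t x s v : oldv t s v -> v \notin BL s -> v \notin BL (step t x s).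
Proof.
move=> ov vB; have [fN fbm frp] := fresh_facts ov.
rewrite BL_step; case: x => //.
- by rewrite in_cons negb_or eq_sym fN.
- move: vB; rewrite /BL; case: (bstk s) => [|y st] /=.
    by rewrite !inE => _; rewrite eq_sym fbm.
  by rewrite in_cons negb_or => /andP [].
Qed.

Lemma notin_RL_step t x s v : oldv t s v -> v \notin RL s -> v \notin RL (step t x s).
Proof.
move=> ov vR; have [fN fbm frp] := fresh_facts ov.
rewrite RL_step; case: x => //.
- by rewrite in_cons negb_or eq_sym fN.
- move: vR; rewrite /RL; case: (rstk s) => [|y st] /=.
    by rewrite !inE => _; rewrite eq_sym frp.
  by rewrite in_cons negb_or => /andP [].
Qed.

Lemma posf_step t x s v : Inv t s -> oldv t s v ->
  posf (step t x s) v = npos x (posf s v).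
Proof.
move=> I0 ov; have [fN fbm frp] := fresh_facts ov.
have fbm' : (v == VInt (bint s - 1)%R) = false by rewrite eq_sym.
have frp' : (v == VInt (rint s + 1)%R) = false by rewrite eq_sym.
have U : uniq (BL s ++ RL s) by case/and3P: I0.
move: (U); rewrite cat_uniq => /and3P [UB UBR UR].
have nB x' := notin_BL_step x' ov; have nR x' := notin_RL_step x' ov.
case vB: (v \in BL s); rewrite /posf vB.
- have vR : v \notin RL s by apply: contra UBR => vR; apply/hasP; exists v.
  rewrite (negbTE (nR _ vR)).
  rewrite BL_step; case: x; rewrite ?vB //.
  + by rewrite in_cons vB orbT /= fN.
  + move: vB UB; rewrite /BL; case: (bstk s) => [|y st] /=.
      by rewrite !inE fbm' => /eqP -> _; rewrite eqxx.
    rewrite in_cons => vB /andP [yn _].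
    have [yv|yv] := eqVneq y v.
      by rewrite -yv (negbTE yn) /= ?eqxx.
    have vI : v \in rcons st (VInt (bint s)) by move: vB; rewrite eq_sym (negbTE yv).
    by rewrite vI /= ?(negbTE yv).
- have vB' : v \notin BL s by rewrite vB.
  rewrite (negbTE (nB _ vB')).
  case vR: (v \in RL s).
  + rewrite RL_step; case: x; rewrite ?vR //.
    * by rewrite in_cons vR orbT /= fN.
    * move: vR UR; rewrite /RL; case: (rstk s) => [|y st] /=.
        by rewrite !inE frp' => /eqP -> _; rewrite eqxx.
      rewrite in_cons => vR /andP [yn _].
      have [yv|yv] := eqVneq y v.
        by rewrite -yv (negbTE yn) /= ?eqxx.
      have vI : v \in rcons st (VInt (rint s)) by move: vR; rewrite eq_sym (negbTE yv).
      by rewrite vI /= ?(negbTE yv).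
  + by rewrite (negbTE (nR _ (negbT vR))).
Qed.

Lemma fresh_deg t s u : Inv t s -> ~~ oldv t s u -> degE (edges s) u = 0%N.
Proof.
case/and3P => _ _ E ou; rewrite /degE.
have h1 : count (fun e => e.1 == u) (edges s) = 0%N.
  apply/eqP; rewrite -leqn0 leqNgt -has_count; apply/hasP => -[e eI /eqP eu].
  by move: (allP E e eI) => /andP []; rewrite eu (negbTE ou).
have h2 : count (fun e => e.2 == u) (edges s) = 0%N.
  apply/eqP; rewrite -leqn0 leqNgt -has_count; apply/hasP => -[e eI /eqP eu].
  by move: (allP E e eI) => /andP [] _; rewrite eu (negbTE ou).
by rewrite h1 h2.
Qed.


Fixpoint fut (t : nat) (Y : seq letter) (s : state) (v : vtx) : nat :=
  match Y with [::] => 0%N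
  | x :: Y' => (degE (newedges t x s) v + fut t.+1 Y' (step t x s) v)%N end.

Lemma edges_run t Y s v :
  degE (edges (run_from t Y s)) v = (degE (edges s) v + fut t Y s v)%N.
Proof.
elim: Y t s => [|x Y IH] t s /=; first by rewrite addn0.
by rewrite IH edges_step degE_cat addnA.
Qed.

Fixpoint wordsC (L : nat) : seq (seq letter) :=
  match L with 0 => [:: [::]]
  | L'.+1 => let W := wordsC L' in
     [seq LB :: Y | Y <- W] ++ [seq Lb :: Y | Y <- W] ++
     [seq LR :: Y | Y <- W] ++ [seq Lr :: Y | Y <- W] end.

Lemma size_wordsC L : size (wordsC L) = (4 ^ L)%N.
Proof. elim: L => //= L IH; rewrite !size_cat !size_map IH expnS; lia. Qed.

Open Scope R_scope.

Fixpoint sumR (f : seq letter -> R) (l : seq (seq letter)) : R :=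
  match l with [::] => 0 | x :: l' => f x + sumR f l' end.

Lemma sumR_cat f l1 l2 : sumR f (l1 ++ l2) = sumR f l1 + sumR f l2.
Proof. elim: l1 => /= [|x l IH]; lra. Qed.
Lemma sumR_map f g l : sumR f (map g l) = sumR (fun x => f (g x)) l.
Proof. by elim: l => //= x l ->. Qed.
Lemma sumR_le f g l : (forall x, x \in l -> f x <= g x) -> sumR f l <= sumR g l.
Proof.
elim: l => /= [|x l IH] H; first lra.
apply: Rplus_le_compat; first by apply: H; rewrite inE eqxx.
by apply: IH => y yl; apply: H; rewrite inE yl orbT.
Qed.
Lemma sumR_add f g l : sumR (fun x => f x + g x) l = sumR f l + sumR g l.
Proof. elim: l => /= [|x l ->]; lra. Qed.
Lemma sumR_scal c f l : sumR (fun x => c * f x) l = c * sumR f l.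
Proof. elim: l => /= [|x l ->]; lra. Qed.
Lemma sumR_const c l : sumR (fun _ => c) l = c * INR (size l).
Proof.
elim: l => [|x l IH]; first by rewrite /= Rmult_0_r.
rewrite [LHS]/= IH; change (size (x :: l)) with (size l).+1; rewrite S_INR; ring.
Qed.
Lemma sumR_ge0 f l : (forall x, 0 <= f x) -> 0 <= sumR f l.
Proof. move=> H; elim: l => /= [|x l IH]; [lra | have := H x; lra]. Qed.

Lemma sumR_wordsC f L : sumR f (wordsC L.+1) =
  sumR (fun Y => f (LB :: Y)) (wordsC L) + sumR (fun Y => f (Lb :: Y)) (wordsC L) +
  sumR (fun Y => f (LR :: Y)) (wordsC L) + sumR (fun Y => f (Lr :: Y)) (wordsC L).
Proof. rewrite /= !sumR_cat !sumR_map; lra. Qed.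

Lemma count_sumR (P : pred (seq letter)) l :
  INR (count P l) = sumR (fun W => if P W then 1 else 0) l.
Proof.
elim: l => //= x l <-; rewrite plus_INR; case: (P x) => /=; lra.
Qed.

Definition rho : R := 13 / 16.
Lemma rho_pos : 0 < rho. Proof. rewrite /rho; lra. Qed.
Lemma rho_le1 : rho <= 1. Proof. rewrite /rho; lra. Qed.
Lemma rpow_ge0 n : 0 <= rho ^ n. Proof. apply: pow_le; have := rho_pos; lra. Qed.
Lemma rpow_le1 n : rho ^ n <= 1.
Proof. rewrite -(pow1 n); apply: pow_incr; have := rho_pos; have := rho_le1; lra. Qed.
Lemma rpow_anti a b : (a <= b)%N -> rho ^ b <= rho ^ a.
Proof.
move=> ab; rewrite -(subnKC ab) pow_add.
have := rpow_ge0 a; have := rpow_le1 (b - a); nra.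
Qed.

Definition fbp (p : vpos) (z : nat) : R :=
  match p with PB 0 | PR 0 => rho ^ (z - 1) | PB _ | PR _ => rho ^ (z - 2)
  | POut => if z == 0%N then 1 else 0 end.

Lemma fbp_ge0 p z : 0 <= fbp p z.
Proof. case: p => [[|d]|[|d]|] /=; try apply: rpow_ge0; case: (z == 0)%N; lra. Qed.
Lemma fbp_0 p : fbp p 0 = 1.
Proof. by case: p => [[|d]|[|d]|]. Qed.

Definition incpb x p eb er := match p with PB d => incB x d eb
  | PR d => incR x d er | POut => 0%N end.
Lemma incpE x p s : incp x p s = incpb x p (nilp (bstk s)) (nilp (rstk s)).
Proof. by case: p. Qed.

Ltac subsimpl := rewrite ?subSS ?subn0 ?subn1 /=.

Lemma fb_top z (c : nat) : (c <= 1)%N ->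
  rho ^ (z - 1 - 2) + (if (z - c == 0)%N then 1 else 0) + rho ^ (z - 1 - 1) + rho ^ (z - 1 - 1)
  <= 4 * rho ^ (z - 1).
Proof.
move=> hc; case: z => [|[|[|k]]]; subsimpl.
- lra.
- case: (1 - c == 0)%N; lra.
- have -> : (2 - c == 0)%N = false by apply/eqP; lia.
  rewrite /rho; lra.
- have -> : (k.+3 - c == 0)%N = false by apply/eqP; lia.
  rewrite /= ?subn0; have := rpow_ge0 k; rewrite /rho; nra.
Qed.

Lemma fb_step p (eb er : bool) z : (eb -> forall d, p <> PB d.+1) -> (er -> forall d, p <> PR d.+1) ->
  fbp (npos LB p) (z - incpb LB p eb er) + fbp (npos Lb p) (z - incpb Lb p eb er) +
  fbp (npos LR p) (z - incpb LR p eb er) + fbp (npos Lr p) (z - incpb Lr p eb er)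
  <= 4 * fbp p z.
Proof.
move=> hb hr; case: p hb hr => [[|[|d]]|[|[|d]]|] hb hr /=.
- by apply: fb_top; case: eb {hb}.
- rewrite !subn0; case: eb hb => _ /=; rewrite -?subnDA ?addn1; lra.
- case: eb hb => hb; first by case: (hb erefl d.+1 erefl).
  rewrite /= !subn0; lra.
- have := @fb_top z (if er then 1 else 0)%N; case: er {hr} => /= h.
    by have := h erefl; lra.
  by have := h erefl; lra.
- rewrite !subn0; case: er hr => _ /=; rewrite -?subnDA ?addn1; lra.
- case: er hr => hr; first by case: (hr erefl d.+1 erefl).
  rewrite /= !subn0; lra.
- rewrite !subn0; case: (z == 0)%N; lra.
Qed.

Lemma posf_PB s v d : posf s v = PB d -> (d < size (BL s))%N.
Proof. by rewrite /posf; case: ifP => [vB [<-]|_]; [rewrite index_mem | case: ifP]. Qed.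
Lemma posf_PR s v d : posf s v = PR d -> (d < size (RL s))%N.
Proof. by rewrite /posf; case: ifP => _; [|case: ifP => [vR [<-]|//]; rewrite index_mem]. Qed.

Lemma future L : forall t s v z, Inv t s -> oldv t s v ->
  sumR (fun Y => if (z <= fut t Y s v)%N then 1 else 0) (wordsC L)
  <= fbp (posf s v) z * 4 ^ L.
Proof.
elim: L => [|L IH] t s v z I0 ov.
  rewrite /= Rmult_1_r; case: z => [|z] /=; rewrite ?fbp_0; first lra.
  have := fbp_ge0 (posf s v) z.+1; lra.
have hx x : sumR (fun Y => if (z <= fut t (x :: Y) s v)%N then 1 else 0) (wordsC L) <=
    fbp (npos x (posf s v)) (z - incp x (posf s v) s) * 4 ^ L.
  rewrite -(posf_step x I0 ov) -(inc_step x I0 ov).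
  apply: Rle_trans (IH t.+1 (step t x s) v _ (Inv_step x I0) (oldv_step x ov)).
  apply: sumR_le => Y _; rewrite /= leq_subLR; lra.
rewrite sumR_wordsC.
have hb : nilp (bstk s) -> forall d, posf s v <> PB d.+1.
  move=> /nilP E d /posf_PB; rewrite /BL E /=; lia.
have hr : nilp (rstk s) -> forall d, posf s v <> PR d.+1.
  move=> /nilP E d /posf_PR; rewrite /RL E /=; lia.
have := fb_step z hb hr; rewrite -!incpE.
have := hx LB; have := hx Lb; have := hx LR; have := hx Lr.
have := pow_le 4 L; have := fbp_ge0 (posf s v) z.
rewrite [4 ^ L.+1]/=; nra.
Qed.

Close Scope R_scope.


Lemma run_cat t X Y s : run_from t (X ++ Y) s = run_from (t + size X) Y (run_from t X s).
Proof. by elim: X t s => [|x X IH] t s /=; rewrite ?addn0 // IH addSnnS. Qed.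

Lemma necklace_rcons X x : necklace (rcons X x) = step (size X).+1 x (necklace X).
Proof. by rewrite /necklace -cats1 run_cat /= add1n. Qed.

Lemma Inv_init : Inv 1 init_state.
Proof. by rewrite /Inv /init_state /BL /RL /=. Qed.

Lemma Inv_necklace X : Inv (size X).+1 (necklace X).
Proof.
elim/last_ind: X => [|X x IH]; first exact: Inv_init.
by rewrite necklace_rcons size_rcons; apply: Inv_step.
Qed.

Definition sideL (b : bool) s := if b then BL s else RL s.
Definition accd s (b : bool) d : nat :=
  if (d < size (sideL b s))%N then degE (edges s) (nth (VInt 0) (sideL b s) d) else 1%N.

Lemma posf_nth t s b d : Inv t s -> (d < size (sideL b s))%N ->
  posf s (nth (VInt 0) (sideL b s) d) = if b then PB d else PR d.
Proof.
case/and3P => U _ _; move: (U); rewrite cat_uniq => /and3P [UB UBR UR].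
rewrite /posf /sideL; case: b => dS.
  by rewrite mem_nth // index_uniq.
have iR := mem_nth (VInt 0) dS.
have -> : (nth (VInt 0) (RL s) d \in BL s) = false.
  apply/negP => iB; move/negP: UBR; apply; apply/hasP; by exists (nth (VInt 0) (RL s) d).
by rewrite iR index_uniq.
Qed.

Lemma oldv_nth t s b d : Inv t s -> (d < size (sideL b s))%N ->
  oldv t s (nth (VInt 0) (sideL b s) d).
Proof.
move=> I0 dS; apply: (Inv_old I0); rewrite mem_cat.
by case: b dS => dS /=; rewrite mem_nth ?orbT.
Qed.

Definition lnew (b : bool) := if b then LB else LR.
Definition lmov (b : bool) := if b then Lb else Lr.
Definition stk (b : bool) s := if b then bstk s else rstk s.
Definition freshv (b : bool) s := if b then VInt (bint s - 1)%R else VInt (rint s + 1)%R.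

Lemma size_sideL b s : (0 < size (sideL b s))%N.
Proof. by case: b; rewrite /sideL /BL /RL size_rcons. Qed.

Lemma deg_step_nth t x s b d : Inv t s -> (d < size (sideL b s))%N ->
  degE (edges (step t x s)) (nth (VInt 0) (sideL b s) d) =
  (degE (edges s) (nth (VInt 0) (sideL b s) d) + incp x (if b then PB d else PR d) s)%N.
Proof.
move=> I0 dS; rewrite edges_step degE_cat (inc_step x I0 (oldv_nth I0 dS)).
by rewrite (posf_nth I0 dS).
Qed.

Lemma accd_new0 t s b : Inv t s -> accd (step t (lnew b) s) b 0 = 2%N.
Proof.
move=> I0; have ob := oldv_nth (b:=true) (d:=0) I0 (size_sideL _ _).
have or := oldv_nth (b:=false) (d:=0) I0 (size_sideL _ _).
have [fb _ _] := fresh_facts ob; have [fr _ _] := fresh_facts or.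
move: fb fr; rewrite /sideL /= -blue_end_nth -red_end_nth => fb fr.
have h0 : degE (edges s) (VNew t) = 0%N by apply: (fresh_deg I0); rewrite /= ltnn.
have fb' : (blue_end s == VNew t) = false by rewrite eq_sym.
have fr' : (red_end s == VNew t) = false by rewrite eq_sym.
by case: b; rewrite /accd /sideL edges_step degE_cat ?BL_step ?RL_step /= h0 /degE /= fb' fr' eqxx.
Qed.

Lemma accd_newS t s b d : Inv t s ->
  accd (step t (lnew b) s) b d.+1 = (accd s b d + (d == 0%N))%N.
Proof.
move=> I0.
have hL : sideL b (step t (lnew b) s) = VNew t :: sideL b s.
  by case: b; rewrite /sideL ?BL_step ?RL_step.
rewrite /accd hL [size _]/= ltnS [nth _ _ _]/=; case: ifP => dS.
  by rewrite (deg_step_nth (lnew b) I0 dS); case: b {hL} dS.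
have := size_sideL b s; move/negbT: dS; rewrite -leqNgt; case: d => //; lia.
Qed.

Lemma accd_oth t s b d x : Inv t s -> x != lnew b -> x != lmov b ->
  accd (step t x s) b d = (accd s b d + (d == 0%N))%N.
Proof.
move=> I0 h1 h2.
have hL : sideL b (step t x s) = sideL b s.
  by case: b h1 h2; case: x; rewrite /sideL ?BL_step ?RL_step.
rewrite /accd hL; case: ifP => dS.
  by rewrite (deg_step_nth x I0 dS); case: b {hL} dS h1 h2; case: x.
have := size_sideL b s; move/negbT: dS; rewrite -leqNgt; case: d => //; lia.
Qed.

Lemma accd_mov t s b d : Inv t s ->
  accd (step t (lmov b) s) b d = (accd s b d.+1 + (d == 0%N))%N.
Proof.
move=> I0.
case E: (stk b s) => [|y st].
- have hL : sideL b (step t (lmov b) s) = [:: freshv b s].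
    by case: b E; rewrite /sideL /stk ?BL_step ?RL_step /= => ->.
  have hS : sideL b s = [:: if b then VInt (bint s) else VInt (rint s)].
    by clear hL; case: b E; rewrite /sideL /stk /BL /RL => ->.
  rewrite /accd hL hS /=; case: d => [|d] //=.
  have hf : degE (edges s) (freshv b s) = 0%N.
    apply: (fresh_deg I0); clear hL hS E; case: b => /=; apply/negP; case/andP => *; lia.
  rewrite edges_step degE_cat hf /newedges.
  have or := oldv_nth (b:=false) (d:=0) I0 (size_sideL _ _).
  have ob := oldv_nth (b:=true) (d:=0) I0 (size_sideL _ _).
  have [_ fr1 fr2] := fresh_facts or; have [_ fb1 fb2] := fresh_facts ob.
  move: fr1 fr2 fb1 fb2; rewrite /sideL /= -blue_end_nth -red_end_nth => fr1 fr2 fb1 fb2.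
  case: b E hL hS hf => E hL hS hf /=; move: E; rewrite /stk => E.
    rewrite E /degE /= /blue_end E !VInt_eq eqxx (eq_sym (red_end s)) fr1.
    have -> : (bint s == bint s - 1)%R = false by apply/eqP; lia.
    by [].
  rewrite E /degE /= /red_end E !VInt_eq eqxx (eq_sym (blue_end s)) fb2.
  have -> : (rint s == rint s + 1)%R = false by apply/eqP; lia.
  by [].
- have hL : sideL b (step t (lmov b) s) = behead (sideL b s).
    by case: b E; rewrite /sideL /stk ?BL_step ?RL_step /= => ->.
  have hS : (1 < size (sideL b s))%N.
    by clear hL; case: b E; rewrite /sideL /stk /BL /RL => -> /=; rewrite size_rcons.
  rewrite /accd hL size_behead nth_behead.
  have -> : (d < (size (sideL b s)).-1)%N = (d.+1 < size (sideL b s))%N by lia.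
  case: ifP => dS.
    rewrite (deg_step_nth (lmov b) I0 dS); congr (_ + _)%N.
    by clear hL; case: b E {hS dS} => /= E; rewrite /stk in E; rewrite E /=; case: d.
  by move/negbT: dS; rewrite -leqNgt; case: d => //; lia.
Qed.


Open Scope R_scope.

Lemma sumR_rcons f p : sumR f (wordsC p.+1) =
  sumR (fun X => f (rcons X LB) + f (rcons X Lb) + f (rcons X LR) + f (rcons X Lr)) (wordsC p).
Proof.
elim: p f => [|p IH] f; first by rewrite /=; lra.
rewrite [in RHS]sumR_wordsC sumR_wordsC !IH /=; lra.
Qed.

Definition Spast p b d z := sumR (fun X => rho ^ (z - accd (necklace X) b d)) (wordsC p).
Definition FF (z : nat) := (3/10 * INR z + 1) * rho ^ z.

Lemma FF_ge z : rho ^ z <= FF z.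
Proof. rewrite /FF; have := pos_INR z; have := rpow_ge0 z; nra. Qed.

Lemma N0a z : rho ^ (z - 1) <= FF z.
Proof.
rewrite /FF; case: z => [|z]; first by rewrite /=; lra.
rewrite S_INR; have -> : (z.+1 - 1)%N = z by lia.
rewrite [rho ^ z.+1]/=; have := pos_INR z; have := rpow_ge0 z; rewrite /rho; nra.
Qed.

Lemma N1 z : rho ^ (z - 2) + FF (z - 1 - 1) + 2 * FF (z - 1) <= 4 * FF z.
Proof.
rewrite /FF; case: z => [|[|[|k]]].
- rewrite /=; lra.
- rewrite /= /rho; lra.
- rewrite /= /rho; lra.
- have -> : (k.+3 - 2)%N = k.+1 by lia.
  have -> : (k.+3 - 1 - 1)%N = k.+1 by lia.
  have -> : (k.+3 - 1)%N = k.+2 by lia.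
  rewrite !S_INR [rho ^ k.+3]/= [rho ^ k.+2]/= [rho ^ k.+1]/=.
  have := pos_INR k; have := rpow_ge0 k; rewrite /rho; nra.
Qed.

Lemma accd_init b d : accd init_state b d = 1%N.
Proof. by case: b; case: d. Qed.

Lemma accd_cases t s b d x : Inv t s -> accd (step t x s) b d =
  if x == lnew b then (if d is d'.+1 then (accd s b d' + (d' == 0%N))%N else 2%N)
  else if x == lmov b then (accd s b d.+1 + (d == 0%N))%N
  else (accd s b d + (d == 0%N))%N.
Proof.
move=> I0; case: eqP => [->|h1].
  by case: d => [|d]; [apply: accd_new0 | apply: accd_newS].
case: eqP => [->|h2]; first by apply: accd_mov.
by apply: accd_oth => //; apply/eqP.
Qed.

Lemma INR_expn4 p : INR (4 ^ p)%N = 4 ^ p.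
Proof. elim: p => [|p IH] //; rewrite expnS mult_INR IH /=; lra. Qed.

Lemma subE a z : (z - (a + 1) = z - 1 - a)%N. Proof. lia. Qed.

Lemma past p : forall b, (forall z, Spast p b 0 z <= FF z * 4 ^ p) /\
  (forall d z, Spast p b d.+1 z <= FF (z - 1) * 4 ^ p).
Proof.
elim: p => [|p IH] b.
  rewrite /Spast /= /necklace /= !accd_init; split => [z|d z]; rewrite Rmult_1_r Rplus_0_r.
    exact: N0a.
  rewrite accd_init; exact: FF_ge.
have [IH0 IHS] := IH b.
have hw : 0 <= 4 ^ p by apply: pow_le; lra.
split.
- move=> z; rewrite /Spast sumR_rcons.
  apply: Rle_trans (_ : sumR (fun X => rho ^ (z - 2) + rho ^ (z - 1 - accd (necklace X) b 1)
        + 2 * rho ^ (z - 1 - accd (necklace X) b 0)) (wordsC p) <= _).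
    apply: sumR_le => X _; have I0 := Inv_necklace X.
    rewrite !necklace_rcons !(accd_cases _ _ _ I0).
    by case: b {IH IH0 IHS} => /=; rewrite !subE; lra.
  rewrite !sumR_add sumR_const size_wordsC INR_expn4 sumR_scal.
  have := IH0 (z - 1)%N; have := IHS 0%N (z - 1)%N; have := N1 z.
  rewrite /Spast [4 ^ p.+1]/=; nra.
- move=> d z; rewrite /Spast sumR_rcons.
  apply: Rle_trans (_ : sumR (fun X => rho ^ (z - (accd (necklace X) b d + (d == 0%N))%N)
        + rho ^ (z - accd (necklace X) b d.+2)
        + 2 * rho ^ (z - accd (necklace X) b d.+1)) (wordsC p) <= _).
    apply: sumR_le => X _; have I0 := Inv_necklace X.
    rewrite !necklace_rcons !(accd_cases _ _ _ I0).
    by case: b {IH IH0 IHS} => /=; rewrite ?addn0; lra.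
  rewrite !sumR_add sumR_scal.
  have h1 : sumR (fun X => rho ^ (z - (accd (necklace X) b d + (d == 0%N))%N)) (wordsC p)
      <= FF (z - 1) * 4 ^ p.
    case: d => [|d] /=.
      by apply: Rle_trans (IH0 (z - 1)%N); apply: sumR_le => X _; rewrite subE; lra.
    by apply: Rle_trans (IHS d z); apply: sumR_le => X _; rewrite addn0; lra.
  have := IHS d.+1 z; have := IHS d z.
  rewrite /Spast [4 ^ p.+1]/=; nra.
Qed.

Open Scope R_scope.

Lemma newface_ends t c s : newface t c s = match c with
 | LB => (blue_end s, red_end s, blue_end (step t c s))
 | LR => (blue_end s, red_end s, red_end (step t c s))
 | Lb => (blue_end (step t c s), blue_end s, red_end s)
 | Lr => (blue_end s, red_end s, red_end (step t c s)) end.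
Proof.
case: c; rewrite /newface /step /blue_end /red_end //=.
  by case: (bstk s).
by case: (rstk s).
Qed.

Lemma nth_bound t s b d m : Inv t s -> (d < size (sideL b s))%N ->
  fbp (posf s (nth (VInt 0) (sideL b s) d)) (m - degE (edges s) (nth (VInt 0) (sideL b s) d))
  = fbp (if b then PB d else PR d) (m - accd s b d).
Proof. by move=> I0 dS; rewrite (posf_nth I0 dS) /accd dS. Qed.

Definition Hval (k : nat) (s : state) (m : nat) : R := match k with
  | 0 => rho ^ (m - 3 - accd s true 0)%N | 1 => rho ^ (m - 3 - accd s false 0)%N
  | 2 => rho ^ (m - 2 - accd s true 1)%N | 3 => rho ^ (m - 2 - accd s false 1)%N
  | _ => rho ^ (m - 3)%N end.

Definition tab (c : letter) (i : nat) : nat := match c, i with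
 | LB, 0 => 0 | LB, 1 => 1 | LB, _ => 4
 | Lb, 0 => 2 | Lb, 1 => 0 | Lb, _ => 1
 | LR, 0 => 0 | LR, 1 => 1 | LR, _ => 4
 | Lr, 0 => 0 | Lr, 1 => 1 | Lr, _ => 3 end%N.

Lemma bE s : blue_end s = nth (VInt 0) (sideL true s) 0.
Proof. exact: blue_end_nth. Qed.
Lemma rE s : red_end s = nth (VInt 0) (sideL false s) 0.
Proof. exact: red_end_nth. Qed.

Lemma dead_bound t s x b m : Inv t s ->
  posf (step t x s) (nth (VInt 0) (sideL b s) 0) = POut ->
  (incp x (if b then PB 0 else PR 0) s <= 1)%N ->
  fbp POut (m - degE (edges (step t x s)) (nth (VInt 0) (sideL b s) 0))
  <= rho ^ (m - 3 - accd s b 0).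
Proof.
move=> I0 _ hi; have dS := size_sideL b s.
rewrite (deg_step_nth x I0 dS) /accd dS /=.
case: eqP => h; last by apply: rpow_ge0.
have -> : (m - 3 - degE (edges s) (nth (VInt 0) (sideL b s) 0) = 0)%N by lia.
by rewrite /=; lra.
Qed.

Lemma fv0 (a b c : vtx) (H : (0 < 3)%N) : face_vertex (a, b, c) (Ordinal H) = a. Proof. by []. Qed.
Lemma fv1 (a b c : vtx) (H : (1 < 3)%N) : face_vertex (a, b, c) (Ordinal H) = b. Proof. by []. Qed.
Lemma fv2 (a b c : vtx) (H : (2 < 3)%N) : face_vertex (a, b, c) (Ordinal H) = c. Proof. by []. Qed.

Lemma face_case t s c (i : 'I_3) (m : nat) : Inv t s ->
  oldv t.+1 (step t c s) (face_vertex (newface t c s) i) /\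
  fbp (posf (step t c s) (face_vertex (newface t c s) i))
      (m - degE (edges (step t c s)) (face_vertex (newface t c s) i)) <= Hval (tab c i) s m.
Proof.
move=> I0.
have oB x : oldv t.+1 (step t x s) (blue_end s).
  by apply: oldv_step; apply: (Inv_old I0); rewrite mem_cat blue_end_BL.
have oR x : oldv t.+1 (step t x s) (red_end s).
  by apply: oldv_step; apply: (Inv_old I0); rewrite mem_cat red_end_RL orbT.
have oB' x : oldv t.+1 (step t x s) (blue_end (step t x s)).
  by apply: (Inv_old (Inv_step x I0)); rewrite mem_cat blue_end_BL.
have oR' x : oldv t.+1 (step t x s) (red_end (step t x s)).
  by apply: (Inv_old (Inv_step x I0)); rewrite mem_cat red_end_RL orbT.
split.
  rewrite newface_ends; case: c; case: i => [[|[|[|?]]] Hi] //; rewrite ?fv0 ?fv1 ?fv2;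
    by [apply: oB | apply: oR | apply: oB' | apply: oR'].
have sz x b : (0 < size (sideL b (step t x s)))%N by apply: size_sideL.
have I1 x := Inv_step x I0.
have hB1 : blue_end s = nth (VInt 0) (sideL true (step t LB s)) 1.
  by rewrite /sideL BL_step /= -blue_end_nth.
have hR1 : red_end s = nth (VInt 0) (sideL false (step t LR s)) 1.
  by rewrite /sideL RL_step /= -red_end_nth.
have hBo x : x != LB -> x != Lb -> blue_end s = nth (VInt 0) (sideL true (step t x s)) 0.
  by case: x => // _ _; rewrite /sideL BL_step /= -blue_end_nth.
have hRo x : x != LR -> x != Lr -> red_end s = nth (VInt 0) (sideL false (step t x s)) 0.
  by case: x => // _ _; rewrite /sideL RL_step /= -red_end_nth.
have s2B : (1 < size (sideL true (step t LB s)))%N.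
  by rewrite /sideL BL_step /=; have := size_sideL true s.
have s2R : (1 < size (sideL false (step t LR s)))%N.
  by rewrite /sideL RL_step /=; have := size_sideL false s.
rewrite newface_ends; case: c; case: i => [[|[|[|?]]] Hi] //; rewrite ?fv0 ?fv1 ?fv2.
- rewrite hB1 (nth_bound _ (I1 _) s2B) (accd_cases _ _ _ I0) /=.
  by apply: rpow_anti; lia.
- rewrite (hRo LB) // (nth_bound _ (I1 _) (sz _ _)) (accd_cases _ _ _ I0) /=.
  by apply: rpow_anti; lia.
- rewrite bE (nth_bound _ (I1 _) (sz _ _)) (accd_cases _ _ _ I0) /=.
  by apply: rpow_anti; lia.
- rewrite bE (nth_bound _ (I1 _) (sz _ _)) (accd_cases _ _ _ I0) /=.
  by apply: rpow_anti; lia.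
- rewrite bE.
  have hp : posf (step t Lb s) (nth (VInt 0) (sideL true s) 0) = POut.
    by rewrite (posf_step _ I0 (oldv_nth I0 (size_sideL true s))) (posf_nth I0 (size_sideL true s)).
  rewrite hp [Hval _ _ _]/=; apply: (dead_bound _ I0 hp).
  by rewrite /incp /incB; case: (nilp _).
- rewrite (hRo Lb) // (nth_bound _ (I1 _) (sz _ _)) (accd_cases _ _ _ I0) /=.
  by apply: rpow_anti; lia.
- rewrite (hBo LR) // (nth_bound _ (I1 _) (sz _ _)) (accd_cases _ _ _ I0) /=.
  by apply: rpow_anti; lia.
- rewrite hR1 (nth_bound _ (I1 _) s2R) (accd_cases _ _ _ I0) /=.
  by apply: rpow_anti; lia.
- rewrite rE (nth_bound _ (I1 _) (sz _ _)) (accd_cases _ _ _ I0) /=.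
  by apply: rpow_anti; lia.
- rewrite (hBo Lr) // (nth_bound _ (I1 _) (sz _ _)) (accd_cases _ _ _ I0) /=.
  by apply: rpow_anti; lia.
- rewrite rE.
  have hp : posf (step t Lr s) (nth (VInt 0) (sideL false s) 0) = POut.
    by rewrite (posf_step _ I0 (oldv_nth I0 (size_sideL false s))) (posf_nth I0 (size_sideL false s)).
  rewrite hp [Hval _ _ _]/=; apply: (dead_bound _ I0 hp).
  by rewrite /incp /incR; case: (nilp _).
- rewrite rE (nth_bound _ (I1 _) (sz _ _)) (accd_cases _ _ _ I0) /=.
  by apply: rpow_anti; lia.
Qed.

Open Scope R_scope.

Lemma mem_wordsC L W : W \in wordsC L -> size W = L.
Proof.
elim: L W => [|L IH] W /=; first by rewrite inE => /eqP ->.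
rewrite !mem_cat => /or4P [] /mapP [Y /IH <- ->] //.
Qed.

Lemma sum_split f a b : sumR f (wordsC (a + b)) =
  sumR (fun X => sumR (fun Y => f (X ++ Y)) (wordsC b)) (wordsC a).
Proof.
elim: a f => [|a IH] f; first by rewrite add0n /= Rplus_0_r.
by rewrite addSn !sumR_wordsC !IH.
Qed.

Lemma size_faces_necklace X : size (faces (necklace X)) = size X.
Proof.
elim/last_ind: X => [|X x IH] //.
by rewrite necklace_rcons faces_step !size_rcons IH.
Qed.

Lemma nth_faces_run t Y s k d : (k < size (faces s))%N ->
  nth d (faces (run_from t Y s)) k = nth d (faces s) k.
Proof.
elim: Y t s => [|x Y IH] t s //= ks.
rewrite IH ?faces_step ?size_rcons 1?ltnW // nth_rcons ks //.
Qed.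

Definition Pw (j : nat) (i : 'I_3) (m : nat) (W : seq letter) : bool :=
  (m <= degE (edges (necklace W))
    (face_vertex (nth (VInt 0, VInt 0, VInt 0) (faces (necklace W)) j.-1) i))%N.

Lemma Pw_split i m X c Y :
  let t := (size X).+1 in let s' := step t c (necklace X) in
  let v := face_vertex (newface t c (necklace X)) i in
  Pw t i m (X ++ c :: Y) = (m - degE (edges s') v <= fut t.+1 Y s' v)%N.
Proof.
move=> t s' v.
have hN : necklace (X ++ c :: Y) = run_from t.+1 Y s'.
  by rewrite /necklace run_cat /= add1n.
rewrite /Pw hN edges_run leq_subLR.
rewrite nth_faces_run; last by rewrite /s' faces_step size_rcons size_faces_necklace.
by rewrite /s' faces_step nth_rcons size_faces_necklace ltnn eqxx.
Qed.

Lemma Hsum k a m : sumR (fun X => Hval k (necklace X) m) (wordsC a) <= FF (m - 3) * 4 ^ a.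
Proof.
have [P0 PS] := past a true; have [Q0 QS] := past a false.
case: k => [|[|[|[|k]]]] /=.
- exact: P0.
- exact: Q0.
- by have := PS 0%N (m - 2)%N; rewrite /Spast -subnDA.
- by have := QS 0%N (m - 2)%N; rewrite /Spast -subnDA.
- rewrite sumR_const size_wordsC INR_expn4.
  have := FF_ge (m - 3); have : 0 <= 4 ^ a by apply: pow_le; lra.
  nra.
Qed.

Lemma main_count a b (i : 'I_3) m :
  sumR (fun W => if Pw a.+1 i m W then 1 else 0) (wordsC (a + b.+1)) <= FF (m - 3) * 4 ^ (a + b.+1).
Proof.
rewrite sum_split.
have hb : 0 <= 4 ^ b by apply: pow_le; lra.
apply: Rle_trans (_ : sumR (fun X => (Hval (tab LB i) (necklace X) m + Hval (tab Lb i) (necklace X) m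
   + Hval (tab LR i) (necklace X) m + Hval (tab Lr i) (necklace X) m) * 4 ^ b) (wordsC a) <= _).
  apply: sumR_le => X Xin; have sX := mem_wordsC Xin.
  have I0 := Inv_necklace X.
  have hc c : sumR (fun Y => if Pw a.+1 i m (X ++ c :: Y) then 1 else 0) (wordsC b)
      <= Hval (tab c i) (necklace X) m * 4 ^ b.
    have [ov hv] := face_case c i m I0.
    apply: Rle_trans (_ : fbp (posf (step (size X).+1 c (necklace X))
        (face_vertex (newface (size X).+1 c (necklace X)) i))
        (m - degE (edges (step (size X).+1 c (necklace X)))
           (face_vertex (newface (size X).+1 c (necklace X)) i)) * 4 ^ b <= _); last first.
      by apply: Rmult_le_compat_r.
    apply: Rle_trans (@future b _ _ _ _ (Inv_step c I0) ov).
    by apply: sumR_le => Y _; rewrite -sX Pw_split; lra.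
  rewrite sumR_wordsC; have := hc LB; have := hc Lb; have := hc LR; have := hc Lr; lra.
have e : forall X, (Hval (tab LB i) (necklace X) m + Hval (tab Lb i) (necklace X) m
   + Hval (tab LR i) (necklace X) m + Hval (tab Lr i) (necklace X) m) * 4 ^ b =
   4 ^ b * Hval (tab LB i) (necklace X) m + 4 ^ b * Hval (tab Lb i) (necklace X) m
   + 4 ^ b * Hval (tab LR i) (necklace X) m + 4 ^ b * Hval (tab Lr i) (necklace X) m.
  by move=> X; ring.
apply: Rle_trans (_ : sumR (fun X => 4 ^ b * Hval (tab LB i) (necklace X) m + 4 ^ b * Hval (tab Lb i) (necklace X) m
   + 4 ^ b * Hval (tab LR i) (necklace X) m + 4 ^ b * Hval (tab Lr i) (necklace X) m) (wordsC a) <= _).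
  by apply: sumR_le => X _; rewrite e; lra.
rewrite !sumR_add !sumR_scal pow_add [4 ^ b.+1]/=.
have := Hsum (tab LB i) a m; have := Hsum (tab Lb i) a m;
have := Hsum (tab LR i) a m; have := Hsum (tab Lr i) a m.
have : 0 <= 4 ^ a by apply: pow_le; lra.
have := FF_ge (m - 3); have := rpow_ge0 (m - 3).
nra.
Qed.

Open Scope R_scope.

Lemma pow_anti (c : R) a b : 0 <= c <= 1 -> (a <= b)%N -> c ^ b <= c ^ a.
Proof.
move=> hc ab; rewrite -(subnKC ab) pow_add.
have h1 : 0 <= c ^ a by apply: pow_le; lra.
have h2 : c ^ (b - a) <= 1 by rewrite -(pow1 (b - a)); apply: pow_incr; lra.
nra.
Qed.

Lemma FF_tail k : FF (k + 7) <= 2 * (93/100) ^ (k + 10).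
Proof.
elim: k => [|k IH].
  rewrite /FF /rho /=; lra.
have e1 : (k.+1 + 7 = (k + 7).+1)%N by lia.
have e2 : (k.+1 + 10 = (k + 10).+1)%N by lia.
move: IH; rewrite /FF e1 e2 S_INR [rho ^ (k + 7).+1]/= [(93/100) ^ (k + 10).+1]/= plus_INR.
have := pos_INR k; have := rpow_ge0 (k + 7); rewrite /rho; simpl INR.
nra.
Qed.

Lemma final_num (m : nat) (x : R) : (1 <= m)%N -> 0 <= x -> x <= 1 -> x <= FF (m - 3) ->
  x <= INR 2 * Rpower (INR 3 / INR 4) (INR m / INR 4).
Proof.
move=> hm x0 x1 xF.
have e34 : INR 3 / INR 4 = 3 / 4 by rewrite /=; field.
have e2 : INR 2 = 2 by rewrite /=; lra.
rewrite e34 e2.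
set q := Rpower (3 / 4) (1 / 4).
have qpos : 0 < q by rewrite /q /Rpower; apply: exp_pos.
have eq : Rpower (3 / 4) (INR m / INR 4) = q ^ m.
  rewrite -Rpower_pow // /q Rpower_mult; congr Rpower; rewrite /=; field.
have q4 : q ^ 4 = 3 / 4.
  rewrite -Rpower_pow // /q Rpower_mult.
  have -> : 1 / 4 * INR 4 = 1 by rewrite /=; field.
  by rewrite Rpower_1 //; lra.
have qge : 93 / 100 <= q.
  apply: Rnot_lt_le => hq.
  have : q ^ 4 <= (93/100) ^ 4 by apply: pow_incr; lra.
  rewrite q4 /=; lra.
rewrite eq.
have hq : (93/100) ^ m <= q ^ m by apply: pow_incr; lra.
case: (leqP m 9) => hm9.
  have : (93/100) ^ 9 <= (93/100) ^ m by apply: pow_anti => //; lra.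
  rewrite /=; lra.
have := FF_tail (m - 10).
have -> : (m - 10 + 7 = m - 3)%N by lia.
have -> : (m - 10 + 10 = m)%N by lia.
lra.
Qed.

Close Scope R_scope.


Lemma card_set_count (T : finType) (P : pred T) : #|[set x | P x]| = count P (enum T).
Proof. by rewrite cardsE cardE -deprecated_filter_index_enum size_filter enumT /index_enum unlock. Qed.

Lemma card_letter : #|{: letter}| = 4%N.
Proof.
have : bijective letter_code.
  by exists letter_decode; [exact: letter_codeK | case=> [[] []]].
by move/bij_eq_card ->; rewrite card_prod card_bool.
Qed.

Lemma size_word_of n (w : {ffun 'I_n -> letter}) : size (word_of w) = n.
Proof. by rewrite size_map size_enum_ord. Qed.

Lemma nth_word_of n (w : {ffun 'I_n -> letter}) (i : 'I_n) : nth LB (word_of w) i = w i.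
Proof. by rewrite (nth_map i) ?size_enum_ord // nth_ord_enum. Qed.

Lemma word_of_inj n : injective (@word_of n).
Proof. by move=> w1 w2 e; apply/ffunP => i; rewrite -!nth_word_of e. Qed.

Lemma mem_wordsC_iff L W : (W \in wordsC L) = (size W == L).
Proof.
apply/idP/eqP; first exact: mem_wordsC.
elim: L W => [|L IH] [|x W] //= [sW].
have WI := IH W sW.
by case: x; rewrite !mem_cat ?(map_f (cons _) WI) ?orbT.
Qed.

Lemma hasN_cons (x y : letter) (W1 W2 : seq (seq letter)) : x != y ->
  ~~ has (mem (map (cons x) W1)) (map (cons y) W2).
Proof.
move=> xy; apply/hasPn => z /mapP [Y _ ->]; apply/negP => /mapP [Y' _ [e _]].
by move: xy; rewrite e eqxx.
Qed.

Lemma wordsC_uniq L : uniq (wordsC L).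
Proof.
elim: L => //= L IH.
have ci x : injective (cons x) by move=> ? ? [].
rewrite !cat_uniq !map_inj_uniq; try by move=> ? ? [].
by repeat (apply/andP; split); rewrite ?has_cat ?negb_or ?hasN_cons.
Qed.

Lemma count_words n (P : pred (seq letter)) :
  #|[set w : {ffun 'I_n -> letter} | P (word_of w)]| = count P (wordsC n).
Proof.
rewrite card_set_count -(count_map (@word_of n) P).
apply/permP; apply: uniq_perm.
- by rewrite map_inj_uniq ?enum_uniq //; apply: word_of_inj.
- exact: wordsC_uniq.
move=> W; rewrite mem_wordsC_iff; apply/mapP/eqP => [[w _ ->]|sW].
  exact: size_word_of.
exists [ffun i : 'I_n => nth LB W i]; first by rewrite mem_enum.
apply: (@eq_from_nth _ LB); first by rewrite sW; apply: esym; apply: size_word_of.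
move=> k; rewrite sW => kn.
have := nth_word_of [ffun i : 'I_n => nth LB W i] (Ordinal kn); rewrite ffunE /= => ->.
by [].
Qed.


Open Scope R_scope.
Lemma card_event n j (i : 'I_3) m :
  #|[set p : {ffun 'I_n -> letter} * 'I_n |
           let T := rooted_necklace (word_of p.1) (val p.2).+1 in
           (m <= deg T (face_vertex (face T j) i))%N]| = (count (Pw j i m) (wordsC n) * n)%N.
Proof.
transitivity #|setX [set w : {ffun 'I_n -> letter} | Pw j i m (word_of w)] [set: 'I_n]|.
  by apply: eq_card => -[w k]; rewrite !inE andbT.
by rewrite cardsX cardsT card_ord count_words.
Qed.

Lemma card_total n : #|{: {ffun 'I_n -> letter} * 'I_n}| = (4 ^ n * n)%N.
Proof. by rewrite card_prod card_ffun card_letter card_ord. Qed.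

Theorem lemma3 (n : nat) (hn : (1 <= n)%N) (j : nat) (hj : (1 <= j <= n)%N)
    (i : 'I_3) (m : nat) (hm : (1 <= m)%N) :
  Rle (prob_deg_ge n j i m)
      (Rmult (INR 2) (Rpower (Rdiv (INR 3) (INR 4)) (Rdiv (INR m) (INR 4)))).
Proof.
rewrite /prob_deg_ge card_event card_total !mult_INR INR_expn4.
set c := count (Pw j i m) (wordsC n).
have n0 : INR n <> 0 by apply: not_0_INR; lia.
have p0 : 0 < 4 ^ n by apply: pow_lt; lra.
have -> : INR c * INR n / (4 ^ n * INR n) = INR c / 4 ^ n by field; lra.
apply: final_num => //.
- apply: Rmult_le_pos; [exact: pos_INR | apply: Rlt_le; apply: Rinv_0_lt_compat; lra].
- apply/(Rmult_le_reg_r (4 ^ n)) => //.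
  rewrite /Rdiv Rmult_assoc Rinv_l ?Rmult_1_r ?Rmult_1_l; last lra.
  rewrite -INR_expn4 -(size_wordsC n); apply: le_INR; apply/ssrnat.leP; exact: count_size.
- apply/(Rmult_le_reg_r (4 ^ n)) => //.
  rewrite /Rdiv Rmult_assoc Rinv_l ?Rmult_1_r; last lra.
  have := main_count (j - 1) (n - j) i m.
  have -> : (j - 1).+1 = j by lia.
  have -> : (j - 1 + (n - j).+1)%N = n by lia.
  by rewrite -count_sumR.
Qed.
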